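(* Let $w\in W$. Then (a) $\langle w\cdot 0,\alpha_0^\vee\rangle\geq -2(h-1)$; and (b) $\langle w\cdot 0,\alpha^\vee\rangle\leq h-2$ for every simple root $\alpha\in S$.
   Context: $R$ is an irreducible root system with positive roots $R^+$, simple roots $S$, Weyl group $W$; the inner product is normalized so that short roots $\alpha$ satisfy $\langle\alpha,\alpha\rangle=2$, and $\alpha^\vee=2\alpha/\langle\alpha,\alpha\rangle$. $\rho$ is half the sum of the positive roots, $\alpha_0$ is the highest short root, $h=\langle\rho,\alpha_0^\vee\rangle+1$ is the Coxeter number, and the dot action is $w\cdot\lambda=w(\lambda+\rho)-\rho$. *)

(* Defs.v *)
From HB Require Import structures.
From mathcomp Require Import all_boot all_order all_algebra.
From mathcomp Require Import boolp reals.
Set Implicit Arguments. Unset Strict Implicit. Unset Printing Implicit Defensive.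
Import Order.TTheory GRing.Theory Num.Theory.
Local Open Scope ring_scope.

Section RootSystems.
Variables (R : realType) (n : nat).
Notation V := 'rV[R]_n.

Definition dot (u v : V) : R := (u *m v^T) 0 0.

Definition coroot (a : V) : V := (2 / dot a a) *: a.

Definition refl (a : V) (v : V) : V := v - dot v (coroot a) *: a.

Definition is_root_system (Phi : seq V) : Prop :=
  [/\ uniq Phi /\ (0 : V) \notin Phi, (<<Phi>>%VS = fullv),
      (forall a b, a \in Phi -> b \in Phi -> refl a b \in Phi),
      (forall a b, a \in Phi -> b \in Phi -> exists z : int, dot b (coroot a) = z%:~R)
    & (forall a (c : R), a \in Phi -> c *: a \in Phi -> c = 1 \/ c = -1)].

Definition irreducible_rs (Phi : seq V) : Prop :=
  forall P : pred V,
    (forall a b, a \in Phi -> b \in Phi -> P a -> ~~ P b -> dot a b = 0) ->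
    all P Phi \/ all (predC P) Phi.

Definition nonneg_comb (S : seq V) (v : V) : Prop :=
  exists k : 'I_(size S) -> int,
    (forall i, 0 <= k i) /\ v = \sum_(i < size S) (k i)%:~R *: S`_i.

Definition is_base (Phi S : seq V) : Prop :=
  [/\ {subset S <= Phi}, free S &
      forall b, b \in Phi -> nonneg_comb S b \/ nonneg_comb S (- b)].

Definition pos_roots (Phi S : seq V) : seq V :=
  [seq b <- Phi | `[< nonneg_comb S b >]].

Definition rho (Phi S : seq V) : V := 2^-1 *: \sum_(b <- pos_roots Phi S) b.

Definition short_root (Phi : seq V) (a : V) : Prop :=
  a \in Phi /\ forall b, b \in Phi -> dot a a <= dot b b.

Definition short_normalized (Phi : seq V) : Prop :=
  forall a, short_root Phi a -> dot a a = 2.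

Definition highest_short_root (Phi S : seq V) (a0 : V) : Prop :=
  short_root Phi a0 /\ forall b, short_root Phi b -> nonneg_comb S (a0 - b).

Definition coxeter_number (Phi S : seq V) (a0 : V) : R :=
  dot (rho Phi S) (coroot a0) + 1.

Inductive weyl (Phi : seq V) : (V -> V) -> Prop :=
  | weyl_id : weyl Phi id
  | weyl_refl (a : V) (w : V -> V) :
      a \in Phi -> weyl Phi w -> weyl Phi (fun v => refl a (w v)).

Definition dot_act (Phi S : seq V) (w : V -> V) (l : V) : V :=
  w (l + rho Phi S) - rho Phi S.

End RootSystems.

(* Main.v *)
Require Import Defs.
From HB Require Import structures.
From mathcomp Require Import all_boot all_order all_algebra.
From mathcomp Require Import boolp reals.
From mathcomp Require Import ring lra zify.
Set Implicit Arguments. Unset Strict Implicit. Unset Printing Implicit Defensive.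
Import Order.TTheory GRing.Theory Num.Theory.
Local Open Scope ring_scope.

Section Dot.
Variables (R : realType) (n : nat).
Notation V := 'rV[R]_n.
Implicit Types (u v x a : V).
Set Warnings "-notation-overridden".

Lemma dotE u v : dot u v = \sum_(j < n) u 0 j * v 0 j.
Proof. by rewrite /dot !mxE; apply: eq_bigr => j _; rewrite !mxE. Qed.

Lemma dotC u v : dot u v = dot v u.
Proof. by rewrite !dotE; apply: eq_bigr => j _; rewrite mulrC. Qed.

Lemma dotDl u v x : dot (u + v) x = dot u x + dot v x.
Proof. by rewrite !dotE -big_split; apply: eq_bigr => j _; rewrite mxE mulrDl. Qed.

Lemma dotZl (c : R) u x : dot (c *: u) x = c * dot u x.
Proof. by rewrite !dotE mulr_sumr; apply: eq_bigr => j _; rewrite mxE mulrA. Qed.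

Lemma dot0l x : dot 0 x = 0.
Proof. by rewrite dotE big1 // => j _; rewrite mxE mul0r. Qed.

Lemma dotNl u x : dot (- u) x = - dot u x.
Proof. by rewrite -scaleN1r dotZl mulN1r. Qed.

Lemma dotBl u v x : dot (u - v) x = dot u x - dot v x.
Proof. by rewrite dotDl dotNl. Qed.

Lemma dotDr u v x : dot x (u + v) = dot x u + dot x v.
Proof. by rewrite !(dotC x) dotDl. Qed.
Lemma dotZr (c : R) u x : dot x (c *: u) = c * dot x u.
Proof. by rewrite !(dotC x) dotZl. Qed.
Lemma dotNr u x : dot x (- u) = - dot x u.
Proof. by rewrite !(dotC x) dotNl. Qed.
Lemma dotBr u v x : dot x (u - v) = dot x u - dot x v.
Proof. by rewrite !(dotC x) dotBl. Qed.
Lemma dot0r x : dot x 0 = 0.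
Proof. by rewrite dotC dot0l. Qed.

Lemma dot_suml (I : Type) (s : seq I) (F : I -> V) x :
  dot (\sum_(i <- s) F i) x = \sum_(i <- s) dot (F i) x.
Proof.
elim: s => [|a s IH]; first by rewrite !big_nil dot0l.
by rewrite !big_cons dotDl IH.
Qed.

Lemma dot_ge0 u : 0 <= dot u u.
Proof. by rewrite dotE; apply: sumr_ge0 => j _; rewrite -expr2 sqr_ge0. Qed.

Lemma dot_eq0 u : (dot u u == 0) = (u == 0).
Proof.
apply/idP/eqP => [|->]; last by rewrite dot0l.
rewrite dotE => /eqP/psumr_eq0P H.
have {}H := H (fun i _ => (eq_ind _ (fun t => 0 <= t) (sqr_ge0 (u 0 i)) _ (expr2 _))).
apply/rowP => j; rewrite mxE.
have := H j isT; rewrite -expr2 => /eqP.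
by rewrite sqrf_eq0 => /eqP.
Qed.


Lemma dot_coroot v a : dot v (coroot a) = 2 / dot a a * dot v a.
Proof. by rewrite /coroot dotZr. Qed.

Lemma dot_coroot_self a : a != 0 -> dot a (coroot a) = 2.
Proof.
move=> a0; rewrite dot_coroot -mulrA mulVf ?mulr1 //.
by rewrite dot_eq0.
Qed.

Lemma refl_adj a u v : dot (refl a u) v = dot u (refl a v).
Proof.
rewrite /refl dotBl dotBr dotZl dotZr !dot_coroot (dotC a v) (dotC u v).
ring.
Qed.

Lemma reflK a u : a != 0 -> refl a (refl a u) = u.
Proof.
move=> a0; rewrite {1}/refl {2}/refl dotBl dotZl dot_coroot_self //.
by apply/rowP => j; rewrite !mxE; ring.
Qed.


Lemma refl_iso a u v : a != 0 -> dot (refl a u) (refl a v) = dot u v.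
Proof. by move=> a0; rewrite refl_adj reflK. Qed.

Lemma reflZ a (c : R) v : refl a (c *: v) = c *: refl a v.
Proof. by rewrite /refl dotZl scalerBr scalerA. Qed.

Lemma refl_self a : a != 0 -> refl a a = - a.
Proof.
move=> a0; rewrite /refl dot_coroot_self //.
by apply/rowP => j; rewrite !mxE; ring.
Qed.

Lemma refl_coroot a : a != 0 -> refl a (coroot a) = - coroot a.
Proof. by move=> a0; rewrite /coroot reflZ refl_self // scalerN. Qed.

Lemma sum_if_eq m (j : 'I_m) (v : V) :
  \sum_(i < m) (if i == j then v else 0) = v.
Proof.
by rewrite (bigD1 j) //= eqxx big1 ?addr0 // => i /negbTE ->.
Qed.

End Dot.

Lemma int_sq (R : realFieldType) (z : int) : (z%:~R : R) ^+ 2 < 4 -> z%:~R != 0 :> R ->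
  (z%:~R = 1 :> R) \/ (z%:~R = -1 :> R).
Proof.
move=> H1 H2.
have h1 : ((-2 : int)%:~R : R) < z%:~R.
  have -> : ((-2 : int)%:~R : R) = -2 by rewrite mulrNz.
  nra.
have h2 : (z%:~R : R) < (2 : int)%:~R by rewrite -[(2:int)%:~R]/(2%:R); nra.
rewrite ltr_int in h1; rewrite ltr_int in h2; rewrite intr_eq0 in H2.
have : (z == 1) || (z == -1) by lia.
by case/orP => /eqP ->; [left|right]; rewrite ?mulrNz.
Qed.
Lemma int_gt1 (R : realFieldType) (z : int) : 1 < (z%:~R : R) -> 2 <= (z%:~R : R).
Proof.
rewrite ltr1z => H.
have : (2 <= z)%R by lia.
by rewrite -(ler_int R).
Qed.

Section Roots.
Variables (R : realType) (n : nat) (Phi S : seq 'rV[R]_n).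
Notation V := 'rV[R]_n.
Implicit Types (u v x a b : V).
Hypothesis hR : is_root_system Phi.
Hypothesis hB : is_base Phi S.

Lemma Phi_nz b : b \in Phi -> b != 0.
Proof. by case: hR => [[_ H] _ _ _ _] Hb; apply: contraNneq H => <-. Qed.

Lemma refl_Phi a b : a \in Phi -> b \in Phi -> refl a b \in Phi.
Proof. by case: hR => _ _ H _ _; apply: H. Qed.

Lemma Phi_opp b : b \in Phi -> - b \in Phi.
Proof. by move=> Hb; rewrite -refl_self ?Phi_nz // refl_Phi. Qed.

Lemma Phi_uniq : uniq Phi.
Proof. by case: hR => [[]]. Qed.

Lemma cartan_int a b : a \in Phi -> b \in Phi ->
  exists z : int, dot b (coroot a) = z%:~R.
Proof. by case: hR => _ _ _ H _; apply: H. Qed.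

Lemma reduced a (c : R) : a \in Phi -> c *: a \in Phi -> c = 1 \/ c = -1.
Proof. by case: hR => _ _ _ _ H; apply: H. Qed.

Lemma S_Phi a : a \in S -> a \in Phi.
Proof. by case: hB => H _ _; apply: H. Qed.

Lemma S_free : free S.
Proof. by case: hB. Qed.

Lemma coord0 (x : 'I_(size S) -> R) :
  \sum_(i < size S) x i *: S`_i = 0 -> forall i, x i = 0.
Proof.
move=> H; have /(@freeP _ _ _ (in_tuple S)) Hf := S_free.
exact: Hf x H.
Qed.

Lemma pos_neg_excl b : b \in Phi -> nonneg_comb S b -> nonneg_comb S (- b) -> False.
Proof.
move=> Hb [k [k0 Eb]] [m [m0 Hm]].
have H0 : \sum_(i < size S) ((k i)%:~R + (m i)%:~R) *: S`_i = 0.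
  under eq_bigr do rewrite scalerDl.
  by rewrite big_split /= -Hm -Eb subrr.
have Hk : forall i, (k i)%:~R = 0 :> R.
  move=> i; have := coord0 H0 i.
  have := k0 i; have := m0 i; rewrite -!(ler0z R); lra.
have : \sum_(i < size S) (k i)%:~R *: S`_i = 0.
  by apply: big1 => i _; rewrite Hk scale0r.
by move=> E; move: (Phi_nz Hb); rewrite Eb E eqxx.
Qed.


Lemma sum_delta (j : 'I_(size S)) (c : R) :
  \sum_(i < size S) (if i == j then c else 0) *: S`_i = c *: S`_j.
Proof.
rewrite -(sum_if_eq j (c *: S`_j)); apply: eq_bigr => i _.
by case: eqP => [->|_]; rewrite ?scale0r.
Qed.

Lemma Sj_Phi (j : 'I_(size S)) : S`_j \in Phi.
Proof. by apply: S_Phi; rewrite mem_nth. Qed.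

Lemma refl_pos (j : 'I_(size S)) b : b \in Phi -> nonneg_comb S b -> b != S`_j ->
  nonneg_comb S (refl S`_j b).
Proof.
move=> Hb [k [k0 Eb]] Hne.
have Ha := Sj_Phi j.
have /existsP [i /andP [Hij Hki]] : [exists i, (i != j) && (k i != 0)].
  case: (boolP [exists i, (i != j) && (k i != 0)]) => // /existsPn H; exfalso.
  have Eb' : b = (k j)%:~R *: S`_j.
    rewrite Eb (bigD1 j) //= big1 ?addr0 // => i Hij.
    by move: (H i); rewrite Hij /= negbK => /eqP ->; rewrite scale0r.
  have Hb' : (k j)%:~R *: S`_j \in Phi by rewrite -Eb'.
  have [E1|E1] := reduced Ha Hb'.
    by move: Hne; rewrite Eb' E1 scale1r eqxx.
  by move: (k0 j); rewrite -(ler0z R) E1; lra.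
have Hr := refl_Phi Ha Hb.
case: hB => _ _ /(_ _ Hr) [HH|[m [m0 Hm]]]; first exact: HH.
have [z Hz] := cartan_int Ha Hb.
pose x i := (k i)%:~R + (m i)%:~R - (if i == j then z%:~R else 0) : R.
have H0 : \sum_(i < size S) x i *: S`_i = 0.
  rewrite /x; under eq_bigr do rewrite scalerBl scalerDl.
  rewrite sumrB big_split /= -Hm -Eb sum_delta /refl Hz.
  by rewrite opprB addrC subrK subrr.
have := coord0 H0 i; rewrite /x (negbTE Hij) subr0.
have := k0 i; have := m0 i; rewrite -!(ler0z R).
move: Hki; rewrite -(intr_eq0 R) => Hki.
have : (k i)%:~R <> 0 :> R by move=> E; move: Hki; rewrite E eqxx.
lra.
Qed.


Lemma Sj_pos (j : 'I_(size S)) : nonneg_comb S S`_j.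
Proof.
exists (fun i => if i == j then 1 else 0); split.
  by move=> i; case: (i == j).
rewrite -[LHS]scale1r -sum_delta; apply: eq_bigr => i _.
by case: (i == j).
Qed.

Lemma rho_simple (j : 'I_(size S)) : dot (rho Phi S) (coroot S`_j) = 1.
Proof.
set al := S`_j. have Ha : al \in Phi := Sj_Phi j. have a0 := Phi_nz Ha.
set pos := pos_roots Phi S.
have pos_mem b : (b \in pos) = (b \in Phi) && `[< nonneg_comb S b >].
  by rewrite mem_filter andbC.
have Hapos : al \in pos by rewrite pos_mem Ha; apply/asboolP; apply: Sj_pos.
have Upos : uniq pos := filter_uniq _ Phi_uniq.
set rest := rem al pos.
have Urest : uniq rest := rem_uniq _ Upos.
have Um : uniq (map (refl al) rest).
  by rewrite map_inj_uniq //; apply: (can_inj (g := refl al)) => u; apply: reflK.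
have Hsub : {subset map (refl al) rest <= rest}.
  move=> x /mapP [b Hb ->]; move: Hb; rewrite !mem_rem_uniq // !inE.
  case/andP => Hba; rewrite pos_mem => /andP [Hb /asboolP Hbn].
  apply/andP; split.
    apply/eqP => E.
    have Eb : b = - al by rewrite -(reflK b a0) E refl_self.
    apply: (pos_neg_excl Ha (Sj_pos j)); rewrite -Eb; exact: Hbn.
  rewrite pos_mem refl_Phi //=; apply/asboolP; exact: refl_pos.
have Hsz : (size rest <= size (map (refl al) rest))%N by rewrite size_map.
have [_ Em] := uniq_min_size Um Hsub Hsz.
have Prest : perm_eq rest (map (refl al) rest).
  by apply: uniq_perm => // x; rewrite Em.
have Hrest : \sum_(b <- rest) dot b (coroot al) = 0.
  have E := perm_big _ Prest (P := xpredT) (F := fun b => dot b (coroot al)) (op := +%R) (x := 0).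
  rewrite big_map in E.
  have E2 : \sum_(b <- rest) dot (refl al b) (coroot al) = - \sum_(b <- rest) dot b (coroot al).
    by rewrite -sumrN; apply: eq_bigr => b _; rewrite refl_adj refl_coroot // dotNr.
  rewrite E2 in E.
  move: E; set t := \sum_(b <- rest) _; lra.
rewrite /rho dotZl dot_suml.
rewrite (perm_big _ (perm_to_rem Hapos)) big_cons -/rest Hrest.
by rewrite dot_coroot_self // /= addr0 mulVf // pnatr_eq0.
Qed.


Lemma rho_Sj_ge0 (j : 'I_(size S)) : 0 <= dot (rho Phi S) S`_j.
Proof.
have := rho_simple j; rewrite dot_coroot.
have Np : 0 < dot S`_j S`_j.
  by rewrite lt_def dot_ge0 andbT dot_eq0 Phi_nz // Sj_Phi.
have cp : 0 < 2 / dot S`_j S`_j by rewrite divr_gt0.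
move: cp; set c := 2 / _; set x := dot _ _; nra.
Qed.

Lemma rho_nonneg v : nonneg_comb S v -> 0 <= dot (rho Phi S) v.
Proof.
move=> [k [k0 ->]]; rewrite dotC dot_suml; apply: sumr_ge0 => i _.
rewrite dotZl dotC; apply: mulr_ge0; first by rewrite ler0z.
exact: rho_Sj_ge0.
Qed.

Lemma rho_simple_in a : a \in S -> dot (rho Phi S) (coroot a) = 1.
Proof.
move=> Ha; have Hi : (index a S < size S)%N by rewrite index_mem.
have := rho_simple (Ordinal Hi); rewrite /= nth_index //.
Qed.

Lemma weyl_adj w : weyl Phi w -> exists w' : V -> V,
  [/\ forall u v, dot (w u) v = dot u (w' v),
      forall b, b \in Phi -> w' b \in Phi,
      forall v, dot (w' v) (w' v) = dot v v &
      forall (c : R) v, w' (c *: v) = c *: w' v].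
Proof.
elim => [|a w1 Ha _ [w' [H1 H2 H3 H4]]].
  by exists id; split.
exists (fun v => w' (refl a v)); split.
- by move=> u v; rewrite refl_adj H1.
- by move=> b Hb; apply: H2; apply: refl_Phi.
- by move=> v; rewrite H3 refl_iso // Phi_nz.
- by move=> c v; rewrite reflZ H4.
Qed.

End Roots.

Section Main.
Variables (R : realType) (n : nat) (Phi S : seq 'rV[R]_n) (a0 : 'rV[R]_n).
Notation V := 'rV[R]_n.
Implicit Types (u v x a b d g : V).
Hypothesis hR : is_root_system Phi.
Hypothesis hI : irreducible_rs Phi.
Hypothesis hB : is_base Phi S.
Hypothesis hN : short_normalized Phi.
Hypothesis hH : highest_short_root Phi S a0.

Lemma a0_Phi : a0 \in Phi.
Proof. by case: hH => [[]]. Qed.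

Lemma a0_norm : dot a0 a0 = 2.
Proof. by apply: hN; case: hH. Qed.

Lemma norm_ge2 b : b \in Phi -> 2 <= dot b b.
Proof. by move=> Hb; rewrite -a0_norm; case: hH => [[_ H] _]; apply: H. Qed.

Lemma short_of b : b \in Phi -> dot b b = 2 -> short_root Phi b.
Proof. by move=> Hb Nb; split=> // c Hc; rewrite Nb norm_ge2. Qed.

Lemma le_a0 b : b \in Phi -> dot b b = 2 -> dot (rho Phi S) b <= dot (rho Phi S) a0.
Proof.
move=> Hb Nb; case: hH => _ /(_ _ (short_of Hb Nb)) /(rho_nonneg hR hB).
by rewrite dotBr subr_ge0.
Qed.

Lemma M_ge0 : 0 <= dot (rho Phi S) a0.
Proof.
have := le_a0 (Phi_opp hR a0_Phi).
rewrite dotNl dotNr opprK a0_norm => /(_ erefl); rewrite dotNr; lra.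
Qed.

Lemma coroot_short b : dot b b = 2 -> coroot b = b.
Proof. by move=> Nb; rewrite /coroot Nb divff ?scale1r // pnatr_eq0. Qed.

Lemma exists_nonorth g : g \in Phi ->
  exists d, [/\ d \in Phi, dot d d = 2 & dot g d != 0].
Proof.
move=> Hg.
case: (boolP (has (fun d => (dot d d == 2) && (dot g d != 0)) Phi)).
  by case/hasP => d Hd /andP [/eqP N2 Hgd]; exists d.
move/hasPn => Hn; exfalso.
pose P := fun b => all (fun d => (dot d d != 2) || (dot b d == 0)) Phi.
have HP : forall a b, a \in Phi -> b \in Phi -> P a -> ~~ P b -> dot a b = 0.
  move=> a b Ha Hb /allP Pa /allPn [d Hd].
  rewrite negb_or negbK => /andP [/eqP Nd Hbd].
  have Hr := refl_Phi hR Hb Hd.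
  have Nr : dot (refl b d) (refl b d) = 2 by rewrite refl_iso ?Nd // (Phi_nz hR).
  move: (Pa _ Hr); rewrite Nr eqxx /= /refl dotBr dotZr.
  move: (Pa _ Hd); rewrite Nd eqxx /= => /eqP ->.
  rewrite sub0r oppr_eq0 mulf_eq0 => /orP [|/eqP //].
  rewrite dot_coroot mulf_eq0 dotC (negbTE Hbd) orbF.
  by rewrite mulf_eq0 invr_eq0 dot_eq0 (negbTE (Phi_nz hR Hb)) orbF pnatr_eq0.
case: (hI HP) => /allP H.
  by move: (H _ a0_Phi); rewrite /P => /allP /(_ _ a0_Phi); rewrite a0_norm eqxx /= pnatr_eq0.
move: (H _ Hg) => /= /negP; apply; apply/allP => d Hd.
by move: (Hn _ Hd); rewrite negb_and negbK.
Qed.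

Lemma main_b g : g \in Phi -> dot (rho Phi S) (coroot g) <= dot (rho Phi S) a0.
Proof.
move=> Hg.
have Ng2 := norm_ge2 Hg.
have [E2|Ngt] : dot g g = 2 \/ 2 < dot g g by move: Ng2; rewrite le_eqVlt => /orP [/eqP <-|]; [left|right].
  by rewrite coroot_short // le_a0.
have gnz := Phi_nz hR Hg.
have [d1 [Hd1 Nd1 Hgd1]] := exists_nonorth Hg.
have [d [Hd Nd [z2 Hz2] Hdg]] : exists d, [/\ d \in Phi, dot d d = 2,
    exists z : int, dot g d = z%:~R & dot d (coroot g) = 1].
  have [z1 Hz1] := cartan_int hR Hg Hd1.
  have [z2 Hz2] := cartan_int hR Hd1 Hg.
  rewrite coroot_short // in Hz2.
  have Hrel : z1%:~R * dot g g = 2 * z2%:~R :> R.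
    have Nnz : dot g g != 0 by rewrite dot_eq0.
    rewrite -Hz1 -Hz2 dot_coroot (dotC d1 g); field; exact: Nnz.
  have CS : 0 <= dot g g - z2%:~R ^+ 2 / 2.
    have := dot_ge0 (g - (z2%:~R / 2) *: d1).
    rewrite !dotBl !dotBr !dotZl !dotZr Nd1 (dotC d1 g) Hz2.
    move=> H; apply: le_trans H _; rewrite le_eqVlt; apply/orP; left; apply/eqP; by field.
  have z1nz : z1%:~R != 0 :> R.
    apply/eqP => E; move: Hrel; rewrite E mul0r => /esym /eqP.
    by rewrite mulf_eq0 pnatr_eq0 /= -Hz2 (negbTE Hgd1).
  have Hsq : (z1%:~R : R) ^+ 2 < 4.
    move: Hrel CS Ngt; set N := dot g g; set y := (z1%:~R : R); set x := (z2%:~R : R).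
    move=> Hrel CS Ngt; nra.
  have [E1|E1] := int_sq Hsq z1nz.
    by exists d1; split=> //; [exists z2 | rewrite Hz1].
  exists (- d1); split.
  - exact: Phi_opp.
  - by rewrite dotNl dotNr opprK.
  - by exists (- z2); rewrite dotNr Hz2 mulrNz.
  - by rewrite dotNl Hz1 E1 opprK.
have Hrel : dot g g = 2 * z2%:~R.
  move: Hdg; rewrite dot_coroot (dotC d g) Hz2 => H.
  have Npos : dot g g != 0 by rewrite dot_eq0.
  have E : dot g g * (2 / dot g g * z2%:~R) = 2 * z2%:~R by field.
  by rewrite -E H mulr1.
have Ng4 : 4 <= dot g g.
  have : 1 < (z2%:~R : R) by lra.
  move/int_gt1; lra.
have Hd' : g - d \in Phi.
  have := Phi_opp hR (refl_Phi hR Hg Hd).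
  by rewrite /refl Hdg scale1r opprB.
have Nd' : dot (g - d) (g - d) = 2.
  rewrite !dotBl !dotBr Nd (dotC d g) Hz2 Hrel; ring.
have L1 := le_a0 Hd Nd.
have L2 := le_a0 Hd' Nd'.
have M0 := M_ge0.
have -> : coroot g = (2 / dot g g) *: (d + (g - d)) by rewrite addrC subrK.
rewrite dotZr dotDr.
have cp : 0 < 2 / dot g g by rewrite divr_gt0 //; lra.
have c4 : 2 / dot g g * dot g g = 2 by rewrite mulfVK // dot_eq0.
move: cp c4 L1 L2 M0 Ng4.
set c := 2 / _; set N := dot g g; set x := dot _ d; set y := dot _ (g - d); set M := dot _ a0.
move=> *; nra.
Qed.

End Main.

Theorem proposition2p2p2 (R : realType) (n : nat) (Phi S : seq 'rV[R]_n)
  (a0 : 'rV[R]_n) (w : 'rV[R]_n -> 'rV[R]_n) :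
  is_root_system Phi -> irreducible_rs Phi -> is_base Phi S ->
  short_normalized Phi -> highest_short_root Phi S a0 -> weyl Phi w ->
  - 2 * (coxeter_number Phi S a0 - 1) <= dot (dot_act Phi S w 0) (coroot a0)
  /\ (forall a, a \in S ->
        dot (dot_act Phi S w 0) (coroot a) <= coxeter_number Phi S a0 - 2).
Proof.
move=> hR hI hB hN hH hw.
have [w' [H1 H2 H3 H4]] := weyl_adj hR hw.
have Na0 := a0_norm hN hH.
have Ha0 := a0_Phi hH.
rewrite /dot_act add0r /coxeter_number (coroot_short Na0).
split.
  rewrite dotBl H1.
  have Hb := H2 _ Ha0.
  have Nb : dot (w' a0) (w' a0) = 2 by rewrite H3.
  have := le_a0 hR hB hN hH (Phi_opp hR Hb).
  rewrite dotNl dotNr opprK Nb dotNr => /(_ erefl).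
  lra.
move=> a Ha.
rewrite dotBl H1 (rho_simple_in hR hB Ha).
have Hg := H2 _ (S_Phi hB Ha).
have -> : w' (coroot a) = coroot (w' a) by rewrite /coroot H4 H3.
have := main_b hR hI hB hN hH Hg.
lra.
Qed.
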